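(* Let $G$ be a graph (simple, connected, locally finite, with edges of arbitrary positive lengths) and let $\mathcal{L}(G)$ be its line graph. Let $h:\mathcal{L}(G)\to G$ be the map defined below. Then $h$ is $1$-Lipschitz, i.e. $$d_G(h(x),h(y))\le d_{\mathcal{L}(G)}(x,y)\quad\text{for all } x,y\in\mathcal{L}(G).$$
   Context: Graphs are regarded as geodesic metric spaces: each edge $e$ of length $L(e)$ is identified with the real interval $[0,L(e)]$, so interior points of edges are points of the graph, and $d_G$ is the induced shortest-path distance. The line graph $\mathcal{L}(G)$ has a vertex $V_e$ for each edge $e$ of $G$, and an edge $[V_{e_i},V_{e_j}]$ whenever $e_i\neq e_j$ and $e_i\cap e_j\neq\varnothing$; the length of $[V_{e_i},V_{e_j}]$ is $(L(e_i)+L(e_j))/2$. For $e\in E(G)$, $Pm(e)$ denotes the midpoint of $e$. For an edge $[V_{e_i},V_{e_j}]$ of $\mathcal{L}(G)$, $Pm_{\mathcal{L}}([V_{e_i},V_{e_j}])$ denotes the point of that edge at distance $L(e_i)/2$ from $V_{e_i}$ (hence at distance $L(e_j)/2$ from $V_{e_j}$). The map $h$ is defined by $h(V_e)=Pm(e)$ and $h(Pm_{\mathcal{L}}([V_{e_i},V_{e_j}]))=$ the common vertex $e_i\cap e_j$ of $G$; and for a point $x_0$ in the interior of the segment from $V_e$ to $Pm_{\mathcal{L}}([V_e,V_{e_0}])$ (a segment of length $L(e)/2$), $h(x_0)$ is the point of the half-edge of $e$ from $Pm(e)$ to the vertex $e\cap e_0$ at distance $d(x_0,V_e)$ from $Pm(e)$.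 *)

(* Defs.v *)
From HB Require Import structures.
From mathcomp Require Import all_boot all_order all_algebra.
From mathcomp Require Import boolp classical_sets reals.
From Stdlib Require List.
Set Implicit Arguments. Unset Strict Implicit. Unset Printing Implicit Defensive.
Import Order.TTheory GRing.Theory Num.Theory.
Local Open Scope ring_scope.
Local Open Scope classical_set_scope.

(* A weighted graph: vertex type, adjacency relation, edge-length function
   (len u v is the length of the edge {u,v}, meaningful when adj u v). *)
Record mgraph (R : realType) := MGraph {
  gV : Type;
  gadj : gV -> gV -> Prop;
  glen : gV -> gV -> R }.

Section Graphs.
Variable R : realType.
Implicit Types G : mgraph R.

(* A finite walk a = v0, v1, ..., vk (the list vs = [v1;...;vk]). *)
Fixpoint walk_ok G (a : gV G) (vs : seq (gV G)) : Prop :=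
  match vs with
  | [::] => True
  | v :: vs' => gadj a v /\ walk_ok v vs'
  end.

Fixpoint walk_len G (a : gV G) (vs : seq (gV G)) : R :=
  match vs with
  | [::] => 0
  | v :: vs' => glen a v + walk_len v vs'
  end.

Definition wf_graph G : Prop :=
  [/\ (forall u v : gV G, gadj u v -> gadj v u),
      (forall u : gV G, ~ gadj u u),
      (forall u v : gV G, gadj u v -> glen u v = glen v u /\ 0 < glen u v),
      (forall u : gV G, exists s : seq (gV G), forall v, gadj u v -> List.In v s)
    & (forall a b : gV G, exists vs, walk_ok a vs /\ last a vs = b)].

(* A point of the metric graph G: a triple (u, v, t) with adj u v and
   0 <= t <= len u v, denoting the point of the edge {u,v} at distance t from u.
   (Vertex w is represented by (w, v, 0) for any neighbour v.)  Several triples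
   represent the same point; the distance below does not depend on the choice. *)
Definition mpoint G := (gV G * gV G * R)%type.

Definition is_point G (x : mpoint G) : Prop :=
  gadj x.1.1 x.1.2 /\ 0 <= x.2 <= glen x.1.1 x.1.2.

(* Lengths of the paths from x to y in the metric graph: either a path inside
   the common edge, or: from x to an endpoint a of its edge, then a walk from
   a to an endpoint b of y's edge, then from b to y. *)
Definition path_lengths G (x y : mpoint G) : set R :=
  [set d | ((x.1.1 = y.1.1 /\ x.1.2 = y.1.2 /\ d = `|x.2 - y.2|)
          \/ (x.1.1 = y.1.2 /\ x.1.2 = y.1.1
              /\ d = `|x.2 - (glen y.1.1 y.1.2 - y.2)|))
       \/ (exists (a b : gV G) (ca cb : R) (vs : seq (gV G)),
             ((a = x.1.1 /\ ca = x.2) \/ (a = x.1.2 /\ ca = glen x.1.1 x.1.2 - x.2))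
          /\ ((b = y.1.1 /\ cb = y.2) \/ (b = y.1.2 /\ cb = glen y.1.1 y.1.2 - y.2))
          /\ walk_ok a vs /\ last a vs = b
          /\ d = ca + walk_len a vs + cb)].

Definition gdist G (x y : mpoint G) : R := inf (path_lengths x y).

Definition edge_set G (u v : gV G) : gV G -> Prop := fun w => w = u \/ w = v.

Definition gedge G := {e : gV G -> Prop | exists u v, gadj u v /\ e = edge_set u v}.

Definition eend1 G (e : gedge G) : gV G := projT1 (cid (proj2_sig e)).
Definition eend2 G (e : gedge G) : gV G :=
  projT1 (cid (projT2 (cid (proj2_sig e)))).

Definition elen G (e : gedge G) : R := glen (eend1 e) (eend2 e).

Definition line_adj G (e f : gedge G) : Prop :=
  e <> f /\ exists w, proj1_sig e w /\ proj1_sig f w.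

Definition line_graph G : mgraph R :=
  @MGraph R (gedge G) (@line_adj G) (fun e f => (elen e + elen f) / 2).

(* the common vertex e ∩ f (meaningful when e, f are adjacent in L(G)) *)
Definition common_vertex G (e f : gedge G) : gV G :=
  match pselect (exists w, proj1_sig e w /\ proj1_sig f w) with
  | left H => projT1 (cid H)
  | right _ => eend1 e
  end.

Definition other_end G (e : gedge G) (w : gV G) : gV G :=
  if pselect (w = eend1 e) then eend2 e else eend1 e.

(* A point x = (V_e, V_f, t) of L(G) lies on the edge
   [V_e, V_f] at distance t from V_e; Pm_L([V_e,V_f]) is at t = L(e)/2.
   - for t <= L(e)/2, h(x) is the point of the half-edge of e from Pm(e) to
     w = e ∩ f at distance t from Pm(e), i.e. at distance L(e)/2 - t from w;
   - for t >= L(e)/2 (distance L(f)/2 - (t - L(e)/2)... from V_f), h(x) is the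
     point of the half-edge of f from Pm(f) to w at distance
     (L(e)+L(f))/2 - t from Pm(f), i.e. at distance t - L(e)/2 from w.
   In particular h(V_e) = Pm(e), h(V_f) = Pm(f), h(Pm_L) = w. *)
Definition hmap G (x : mpoint (line_graph G)) : mpoint G :=
  let: (e, f, t) := x in
  let w := common_vertex e f in
  if t <= elen e / 2 then (w, other_end e w, elen e / 2 - t)
  else (w, other_end f w, t - elen e / 2).

End Graphs.

(* Main.v *)
Require Import Defs.
From HB Require Import structures.
From mathcomp Require Import all_boot all_order all_algebra.
From mathcomp Require Import boolp classical_sets reals.
From mathcomp Require Import lra.
Import Order.TTheory GRing.Theory Num.Theory.
Set Implicit Arguments. Unset Strict Implicit. Unset Printing Implicit Defensive.
Local Open Scope ring_scope.

Lemma walk_ok_cat (R : realType) (G : mgraph R) (a : gV G) vs ws :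
  walk_ok a (vs ++ ws) <-> walk_ok a vs /\ walk_ok (last a vs) ws.
Proof. elim: vs a => [|v vs IH] a /=; [tauto| rewrite IH; tauto]. Qed.

Lemma walk_len_cat (R : realType) (G : mgraph R) (a : gV G) vs ws :
  walk_len a (vs ++ ws) = walk_len a vs + walk_len (last a vs) ws.
Proof. elim: vs a => [|v vs IH] a /=; [by rewrite add0r | by rewrite IH addrA]. Qed.

Lemma walk_len_ge0 (R : realType) (G : mgraph R) : wf_graph G ->
  forall (a : gV G) vs, walk_ok a vs -> 0 <= walk_len a vs.
Proof.
case=> _ _ hl _ _ a vs; elim: vs a => [|v vs IH] a /=; first by [].
case=> h1 h2; have [_ h3] := hl _ _ h1; have := IH _ h2; lra.
Qed.

Lemma walk_rev (R : realType) (G : mgraph R) : wf_graph G ->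
  forall (a : gV G) vs, walk_ok a vs -> exists ws, walk_ok (last a vs) ws /\
   last (last a vs) ws = a /\ walk_len (last a vs) ws = walk_len a vs.
Proof.
move=> wf; have [hs _ hl _ _] := wf.
move=> a vs; elim: vs a => [|v vs IH] a /=.
  by move=> _; exists [::].
case=> h1 h2; have [ws [w1 [w2 w3]]] := IH _ h2.
exists (rcons ws a); split; last split.
- rewrite -cats1 walk_ok_cat w2 /=; split => //; split => //; exact: hs.
- by rewrite last_rcons.
- rewrite -cats1 walk_len_cat w2 w3 /= addr0 addrC; congr (_ + _).
  by have [-> _] := hl _ _ h1.
Qed.

Definition endc (R : realType) (G : mgraph R) (p : mpoint G) (a : gV G) (ca : R) :=
  (a = p.1.1 /\ ca = p.2) \/ (a = p.1.2 /\ ca = glen p.1.1 p.1.2 - p.2).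

Definition reach (R : realType) (G : mgraph R) (p : mpoint G) (v : gV G) (c : R) :=
  exists a ca vs, endc p a ca /\ walk_ok a vs /\ last a vs = v /\ ca + walk_len a vs <= c.

Lemma reach_le (R : realType) (G : mgraph R) (p : mpoint G) v c c' :
  reach p v c -> c <= c' -> reach p v c'.
Proof.
move=> [a [ca [vs [h1 [h2 [h3 h4]]]]]] hc; exists a, ca, vs; do 3 split => //.
exact: le_trans hc.
Qed.

Lemma reach_ext (R : realType) (G : mgraph R) (p : mpoint G) u c ws :
  reach p u c -> walk_ok u ws -> reach p (last u ws) (c + walk_len u ws).
Proof.
move=> [a [ca [vs [h1 [h2 [h3 h4]]]]]] hw; exists a, ca, (vs ++ ws).
rewrite walk_ok_cat last_cat walk_len_cat h3; do 3 split => //.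
lra.
Qed.

Lemma reach_join (R : realType) (G : mgraph R) : wf_graph G ->
  forall (p q : mpoint G) v c1 c2, reach p v c1 -> reach q v c2 ->
  exists d, path_lengths p q d /\ d <= c1 + c2.
Proof.
move=> wf p q v c1 c2 [a [ca [vs [h1 [h2 [h3 h4]]]]]]
  [b [cb [ws [k1 [k2 [k3 k4]]]]]].
have [ws' [r1 [r2 r3]]] := walk_rev wf k2.
rewrite k3 in r1 r2 r3.
exists (ca + walk_len a (vs ++ ws') + cb); split.
  right; exists a, b, ca, cb, (vs ++ ws'); split; first by [].
  split; first by [].
  rewrite walk_ok_cat last_cat h3; split => //.
rewrite walk_len_cat h3 r3; lra.
Qed.

Lemma eendP (R : realType) (G : mgraph R) (e : gedge G) :
  gadj (eend1 e) (eend2 e) /\ proj1_sig e = edge_set (eend1 e) (eend2 e).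
Proof.
rewrite /eend1 /eend2; case: (cid (proj2_sig e)) => u H /=.
move: (svalP _) => /= H'; by case: (cid H') => v /= [h1 h2].
Qed.

Lemma on_edge (R : realType) (G : mgraph R) (e : gedge G) w :
  proj1_sig e w <-> w = eend1 e \/ w = eend2 e.
Proof. by have [_ ->] := eendP e. Qed.

Lemma elen_gt0 (R : realType) (G : mgraph R) : wf_graph G ->
  forall e : gedge G, 0 < elen e.
Proof. case=> _ _ hl _ _ e; have [h _] := eendP e; exact: (hl _ _ h).2. Qed.

Lemma other_endP (R : realType) (G : mgraph R) : wf_graph G ->
  forall (e : gedge G) w, proj1_sig e w ->
  [/\ proj1_sig e (other_end e w), other_end e w <> w,
      gadj w (other_end e w) & glen w (other_end e w) = elen e].
Proof.
move=> wf; have [hs hi hl _ _] := wf => e w hw.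
have [ha _] := eendP e.
have n12 : eend1 e <> eend2 e by move=> h; rewrite h in ha; exact: hi _ ha.
have i1 : proj1_sig e (eend1 e) by apply/on_edge; left.
have i2 : proj1_sig e (eend2 e) by apply/on_edge; right.
rewrite /other_end /elen; case: pselect => h /=.
  by rewrite h; split => // /esym.
have h2 : w = eend2 e by case/on_edge: hw.
rewrite h2; split => //; [exact: hs | by have [] := hl _ _ ha].
Qed.

Lemma edge_two (R : realType) (G : mgraph R) (e : gedge G) w u :
  proj1_sig e w -> proj1_sig e u -> u = w \/ u = other_end e w.
Proof.
rewrite !on_edge /other_end; case: pselect => h /= hw hu.
  by subst w; tauto.
by case: hw => // ->; tauto.
Qed.

Lemma other_end_invol (R : realType) (G : mgraph R) : wf_graph G ->
  forall (e : gedge G) w, proj1_sig e w -> other_end e (other_end e w) = w.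
Proof.
move=> wf e w hw; have [h1 h2 _ _] := other_endP wf hw.
by case: (edge_two h1 hw) => // /esym.
Qed.

Lemma edge_step (R : realType) (G : mgraph R) : wf_graph G ->
  forall (e : gedge G) w u, proj1_sig e w -> proj1_sig e u ->
  u = w \/ (gadj w u /\ glen w u = elen e).
Proof.
move=> wf e w u hw hu; case: (edge_two hw hu) => [|->]; first by left.
by have [_ _ ? ?] := other_endP wf hw; right.
Qed.

Lemma cvP (R : realType) (G : mgraph R) (e f : gedge G) :
  line_adj e f -> proj1_sig e (common_vertex e f) /\ proj1_sig f (common_vertex e f).
Proof.
move=> [_ H]; rewrite /common_vertex; case: pselect => // H'.
by case: (cid H') => w /=.
Qed.

Lemma cv_uniq (R : realType) (G : mgraph R) : wf_graph G ->
  forall (e f : gedge G) w1 w2, line_adj e f ->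
  proj1_sig e w1 -> proj1_sig f w1 -> proj1_sig e w2 -> proj1_sig f w2 -> w1 = w2.
Proof.
move=> wf e f w1 w2 [nef _] e1 f1 e2 f2.
apply: contrapT => n12; apply: nef.
have E: forall g : gedge G, proj1_sig g w1 -> proj1_sig g w2 ->
  proj1_sig g = (fun z => z = w1 \/ z = w2).
  move=> g g1 g2; apply: funext => z; rewrite propeqE; split.
    move=> gz; case: (edge_two g1 gz) => [->|->]; first by left.
    right; case: (edge_two g1 g2) => [h|-> //]; by case: n12.
  by case=> ->.
move: (E e e1 e2) (E f f1 f2); case: e {e1 e2} => pe he; case: f {f1 f2} => pf hf /= h1 h2; subst pe pf.
by congr exist; apply: Prop_irrelevance.
Qed.

Lemma cv_sym (R : realType) (G : mgraph R) : wf_graph G ->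
  forall (e f : gedge G), line_adj e f -> common_vertex f e = common_vertex e f.
Proof.
move=> wf e f ef.
have fe : line_adj f e by case: ef => [n [w [? ?]]]; split; [move=> h; apply: n; rewrite h| exists w].
have [a1 a2] := cvP ef; have [b1 b2] := cvP fe.
exact: (cv_uniq wf ef).
Qed.

Lemma absle (R : realType) (a b : R) : a <= b -> -a <= b -> `|a| <= b.
Proof. move=> h1 h2; rewrite ler_norml; apply/andP; split; lra. Qed.

Lemma absge (R : realType) (a : R) : a <= `|a| /\ -a <= `|a|.
Proof. by split; [exact: ler_norm | rewrite -normrN; exact: ler_norm]. Qed.

Definition CL (R : realType) (G : mgraph R) (p : mpoint G) (a : gedge G) (ca : R) :=
  (exists u d, proj1_sig a u /\ p = (u, other_end a u, elen a / 2 - d)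
       /\ 0 <= d <= ca /\ d <= elen a / 2)
  \/ (exists u, proj1_sig a u /\ reach p u (ca - elen a / 2)).

Lemma hCL (R : realType) (G : mgraph R) : wf_graph G ->
  forall (x : mpoint (line_graph G)) a ca, is_point x ->
  ((a = x.1.1 /\ ca = x.2) \/ (a = x.1.2 /\ ca = glen x.1.1 x.1.2 - x.2)) ->
  CL (hmap x) a ca.
Proof.
move=> wf [[e f] t] a ca [/= ef /andP [t0 t1]].
have [we wf'] := cvP ef.
have Lf := elen_gt0 wf f; have Le := elen_gt0 wf e.
rewrite /hmap /=; case=> [[-> ->]|[-> ->]]; case: leP => h.
- left; exists (common_vertex e f), t; do 2 split => //; lra.
- right; exists (common_vertex e f); split => //.
  exists (common_vertex e f), (t - elen e / 2), [::]; split; first by left.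
  by do 2 split => //=; lra.
- right; exists (common_vertex e f); split => //.
  exists (common_vertex e f), (elen e / 2 - t), [::]; split; first by left.
  by do 2 split => //=; lra.
- left; exists (common_vertex e f), ((elen e + elen f) / 2 - t).
  do 2 split => //; last by lra.
  by congr (_, _); lra.
Qed.

Lemma CL_reach (R : realType) (G : mgraph R) : wf_graph G ->
  forall (p : mpoint G) a ca v, CL p a ca -> proj1_sig a v ->
  reach p v (ca + elen a / 2).
Proof.
move=> wf p a ca v [[u [d [au [-> [/andP [d0 dc] dh]]]]]|[u [au r]]] av.
  case: (edge_two au av) => ->.
    exists u, (elen a / 2 - d), [::]; split; first by left.
    by do 2 split => //=; lra.
  have [_ _ _ gl] := other_endP wf au.
  exists (other_end a u), (glen u (other_end a u) - (elen a / 2 - d)), [::].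
  split; first by right.
  by do 2 split => //=; lra.
case: (edge_two au av) => ->.
  by apply: reach_le r _; have := elen_gt0 wf a; lra.
have [_ _ ad gl] := other_endP wf au.
have := reach_ext r (ws := [:: other_end a u]) (conj ad I).
move=> /= r'; apply: reach_le r' _; rewrite gl; lra.
Qed.

Lemma CL_join (R : realType) (G : mgraph R) : wf_graph G ->
  forall (p q : mpoint G) a c1 c2, CL p a c1 -> CL q a c2 ->
  exists d, path_lengths p q d /\ d <= c1 + c2.
Proof.
move=> wf p q a c1 c2 Hp Hq.
case: Hp => [Hp'|[u [au r]]]; last first.
  have [d [h1 h2]] := reach_join wf r (CL_reach wf Hq au).
  by exists d; split => //; lra.
case: Hq => [Hq'|[u [au r]]]; last first.
  have [d [h1 h2]] := reach_join wf (CL_reach wf (or_introl Hp') au) r.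
  by exists d; split => //; lra.
move: Hp' Hq' => [u [d1 [au [-> [/andP [d10 d1c] d1h]]]]]
  [u' [d2 [au' [-> [/andP [d20 d2c] d2h]]]]].
case: (edge_two au au') => ->.
  exists `|(elen a / 2 - d1) - (elen a / 2 - d2)|; split.
    by left; left.
  by apply: absle; lra.
have [o1 _ _ _] := other_endP wf au.
have [_ _ _ gl] := other_endP wf o1.
rewrite (other_end_invol wf au) in gl *.
exists `|(elen a / 2 - d1) - (glen (other_end a u) u - (elen a / 2 - d2))|; split.
  by left; right.
by rewrite gl; apply: absle; lra.
Qed.

Lemma Lwalk (R : realType) (G : mgraph R) : wf_graph G ->
  forall (vs : seq (gedge G)) (a : gedge G), (0 < size vs)%N ->
  @walk_ok R (line_graph G) a vs ->
  exists u z ws, proj1_sig a u /\ proj1_sig (last a vs) z /\ walk_ok u ws /\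
    last u ws = z /\
    walk_len u ws <= @walk_len R (line_graph G) a vs - (elen a + elen (last a vs)) / 2.
Proof.
move=> wf; elim=> [//|c vs IH] a _ /= [ac hw].
case: ac => [nac [w [aw cw]]].
case: vs IH hw => [|c' vs] IH hw.
  exists w, w, [::]; do 4 split => //=; lra.
have [u' [z [ws' [cu' [bz [w1 [w2 w3]]]]]]] := IH c isT hw.
move: w3 bz; rewrite /= => w3 bz.
have Lc := elen_gt0 wf c.
case: (edge_step wf cw cu') => [eq|[adj gl]].
  subst u'; exists w, z, ws'; do 4 split => //; lra.
exists w, z, (u' :: ws'); do 4 split => //=; lra.
Qed.

Lemma Lconn (R : realType) (G : mgraph R) : wf_graph G ->
  forall (a : gV G) gvs, walk_ok a gvs -> forall e f : gedge G,
  proj1_sig e a -> proj1_sig f (last a gvs) ->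
  exists vs, @walk_ok R (line_graph G) e vs /\ last e vs = f.
Proof.
move=> wf a gvs; elim: gvs a => [|v gvs IH] a /=.
  move=> _ e f ea fa; case: (pselect (e = f)) => [->|nef]; first by exists [::].
  exists [:: f]; split; last by [].
  split; last by []. split => //. by exists a.
case=> av hw e f ea fl.
have gP : exists u w, gadj u w /\ edge_set a v = edge_set u w by exists a, v.
pose g : gedge G := exist _ (edge_set a v) gP.
have gv : proj1_sig g v by right.
have ga : proj1_sig g a by left.
have [vs [h1 h2]] := IH v hw g f gv fl.
case: (pselect (e = g)) => [->|neg]; first by exists vs.
exists (g :: vs); split; last by [].
split; last by []. split => //. by exists a.
Qed.

Lemma pl_vert (R : realType) (G : mgraph R) (w o1 o2 : gV G) (s1 s2 : R) :
  path_lengths (w, o1, s1) (w, o2, s2) (s1 + s2).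
Proof.
right; exists w, w, s1, s2, [::]; split; first by left.
split; first by left.
by do 2 split => //=; rewrite addr0.
Qed.

Lemma pl_same (R : realType) (G : mgraph R) (w o : gV G) (s1 s2 : R) :
  path_lengths (w, o, s1) (w, o, s2) `|s1 - s2|.
Proof. by left; left. Qed.

Ltac finish := match goal with |- context [ (_ <= @Num.norm _ _ ?X)%R ] =>
  have [A1 A2] := absge X; first [ apply: absle; lra | lra ] end.

Lemma main_pl (R : realType) (G : mgraph R) : wf_graph G ->
  forall x y : mpoint (line_graph G), is_point x -> is_point y ->
  forall d, path_lengths x y d ->
  exists d', path_lengths (hmap x) (hmap y) d' /\ d' <= d.
Proof.
move=> wf x y px py d.
case=> [[[e1 [e2 ->]] | [e1 [e2 ->]]] | [a [b [ca [cb [vs [ha [hb [hw [hl ->]]]]]]]]]].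
- move: x y px py e1 e2 => [[e f] t] [[e' f'] t'] px py /= e1 e2; subst e' f'.
  rewrite /hmap /=.
  case: (leP t (elen e / 2)) => h1; case: (leP t' (elen e / 2)) => h2.
  + by eexists; split; [exact: pl_same | finish].
  + by eexists; split; [exact: pl_vert | finish].
  + by eexists; split; [exact: pl_vert | finish].
  + by eexists; split; [exact: pl_same | finish].
- move: x y px py e1 e2 => [[e f] t] [[e' f'] t'] px py /= e1 e2; subst e' f'.
  have ef : line_adj e f by case: px.
  rewrite /hmap /= (cv_sym wf ef).
  case: (leP t (elen e / 2)) => h1; case: (leP t' (elen f / 2)) => h2.
  + by eexists; split; [exact: pl_vert | finish].
  + by eexists; split; [exact: pl_same | finish].
  + by eexists; split; [exact: pl_same | finish].
  + by eexists; split; [exact: pl_vert | finish].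
- have Cx := hCL wf px ha; have Cy := hCL wf py hb.
  case: vs hw hl => [|c vs] hw hl.
    move: hl => /= hl; subst b.
    have [d' [h1 h2]] := CL_join wf Cx Cy.
    by exists d'; split => //=; lra.
  have [u [z [ws [au [bz [w1 [w2 w3]]]]]]] := @Lwalk R G wf (c :: vs) a isT hw.
  rewrite hl in bz w3.
  have r1 := reach_ext (CL_reach wf Cx au) w1; rewrite w2 in r1.
  have [d' [h1 h2]] := reach_join wf r1 (CL_reach wf Cy bz).
  by exists d'; split => //; lra.
Qed.

Lemma pl_ge0 (R : realType) (G : mgraph R) : wf_graph G ->
  forall p q : mpoint G, 0 <= p.2 <= glen p.1.1 p.1.2 -> 0 <= q.2 <= glen q.1.1 q.1.2 ->
  forall d, path_lengths p q d -> 0 <= d.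
Proof.
move=> wf p q /andP [p0 p1] /andP [q0 q1] d.
case=> [[[_ [_ ->]]|[_ [_ ->]]]|[a [b [ca [cb [vs [ha [hb [hw [hl ->]]]]]]]]]];
  try exact: normr_ge0.
have := walk_len_ge0 wf hw.
by case: ha => [[_ ->]|[_ ->]]; case: hb => [[_ ->]|[_ ->]]; lra.
Qed.

Lemma hbounds (R : realType) (G : mgraph R) : wf_graph G ->
  forall x : mpoint (line_graph G), is_point x ->
  0 <= (hmap x).2 <= glen (hmap x).1.1 (hmap x).1.2.
Proof.
move=> wf [[e f] t] [/= ef /andP [t0 t1]].
have [we wf'] := cvP ef.
have [_ _ _ ge] := other_endP wf we; have [_ _ _ gf] := other_endP wf wf'.
rewrite /hmap /=; case: (leP t (elen e / 2)) => h /=; rewrite ?ge ?gf; apply/andP; split; lra.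
Qed.

Theorem mainTheorem1 (R : realType) (G : mgraph R) :
  wf_graph G ->
  forall x y : mpoint (line_graph G),
    is_point x -> is_point y ->
    gdist (hmap x) (hmap y) <= gdist x y.
Proof.
move=> wf x y px py; rewrite /gdist; apply: lb_le_inf.
  move: x y px py => [[e f] t] [[e' f'] t'] px py.
  have [_ _ _ _ conn] := wf.
  have [gvs [gw gl]] := conn (eend1 e) (eend1 e').
  have i1 : proj1_sig e (eend1 e) by apply/on_edge; left.
  have i2 : proj1_sig e' (last (eend1 e) gvs) by rewrite gl; apply/on_edge; left.
  have [vs [h1 h2]] := Lconn wf gw i1 i2.
  exists (t + @walk_len R (line_graph G) e vs + t').
  right; exists e, e', t, t', vs; split; first by left.
  by split; first by left.
move=> d Hd; have [d' [h1 h2]] := main_pl wf px py Hd.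
apply: le_trans h2; apply: (ge_inf _ h1).
exists 0 => z hz; apply: (pl_ge0 wf _ _ hz); [exact: (hbounds wf px) | exact: (hbounds wf py)].
Qed.
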